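(* Fix $n\geq 5$ and let $r>0$. Consider the $n\times n$ symmetric matrices $P=[p_{ij}]$ with $p_{ii}=x_i\geq 0$ ($1\le i\le n$), $p_{i,i+2}=p_{i+2,i}=y_i\geq 0$ ($1\le i\le n-2$), and all other entries (in particular $p_{i,i+1}=p_{i+1,i}$) equal to $0$. Then $P^{\circ r}$ is positive definite for every positive definite such $P$ if and only if $r\geq 1$; likewise, $P^{\circ r}$ is positive semidefinite for every positive semidefinite such $P$ if and only if $r\geq 1$.
   Context: For a nonnegative matrix $A=[a_{ij}]$ and $r>0$, the Hadamard power is $A^{\circ r}=[a_{ij}^r]$. Positive (semi)definite matrices are required to be symmetric. *)

(* Defs.v *)
From HB Require Import structures.
From mathcomp Require Import all_boot all_order all_algebra.
From mathcomp Require Import reals exp.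
Set Implicit Arguments. Unset Strict Implicit. Unset Printing Implicit Defensive.
Import Order.TTheory GRing.Theory Num.Theory.
Local Open Scope ring_scope.

Definition hpow (R : realType) (n : nat) (r : R) (A : 'M[R]_n) : 'M[R]_n :=
  \matrix_(i, j) (A i j `^ r).

Definition posdef (R : realType) (n : nat) (A : 'M[R]_n) : Prop :=
  A^T = A /\ forall x : 'rV[R]_n, x != 0 -> 0 < (x *m A *m x^T) 0 0.

Definition possemidef (R : realType) (n : nat) (A : 'M[R]_n) : Prop :=
  A^T = A /\ forall x : 'rV[R]_n, 0 <= (x *m A *m x^T) 0 0.

Definition dist2_pattern (R : realType) (n : nat) (P : 'M[R]_n) : Prop :=
  P^T = P /\
  (forall i j, 0 <= P i j) /\
  (forall i j : 'I_n, i != j -> (i : nat) != (j + 2)%N -> (j : nat) != (i + 2)%N ->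
     P i j = 0).

(* Main.v *)
Require Import Defs.
From HB Require Import structures.
From mathcomp Require Import all_boot all_order all_algebra.
From mathcomp Require Import reals exp.
From mathcomp Require Import ring lra zify.
Import Order.TTheory GRing.Theory Num.Theory.
Local Open Scope ring_scope.

Section QF.
Variable R : realType.
Implicit Types (x y v : nat -> R).

Fixpoint qf x y v (n : nat) : R :=
  if n is m.+1 then qf x y v m + x m * v m ^+ 2 +
    (if m is k.+2 then 2 * y k * v k * v m else 0) else 0.

Lemma qf_ext x y v x' y' v' n :
  (forall i, (i < n)%N -> x i = x' i) ->
  (forall i, (i.+2 < n)%N -> y i = y' i) ->
  (forall i, (i < n)%N -> v i = v' i) ->
  qf x y v n = qf x' y' v' n.
Proof.
elim: n => [//|m IH] hx hy hv /=.
rewrite IH; first last.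
- by move=> i hi; apply: hv; apply: ltnW.
- by move=> i hi; apply: hy; apply: ltnW.
- by move=> i hi; apply: hx; apply: ltnW.
rewrite hx // hv //; case: m IH hx hy hv => [|[|k]] //= IH hx hy hv.
rewrite hy // (hv k) //; last by apply: (@leq_trans k.+3) => //; apply: ltnW.
Qed.

Lemma qf0 x y v n : (forall i, (i < n)%N -> v i = 0) -> qf x y v n = 0.
Proof.
elim: n => [//|m IH] hv /=.
rewrite IH; last by move=> i hi; apply: hv; apply: ltnW.
rewrite hv //.
case: m IH hv => [|[|k]] //= IH hv; rewrite ?hv //; (ring || lia).
Qed.

Lemma qf_modx x x' y v n k : (k < n)%N -> (forall i, i != k -> x i = x' i) ->
  qf x y v n = qf x' y v n + (x k - x' k) * v k ^+ 2.
Proof.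
elim: n => [//|m IH] hk hx /=.
have [km|] := ltnP k m.
  rewrite IH // (hx m); last by rewrite neq_ltn km orbT.
  set c := (if m is _.+2 then _ else _); ring.
move=> mk; have ek : k = m by lia.
subst k.
have -> : qf x y v m = qf x' y v m.
  apply: qf_ext => // i im; apply: hx; by rewrite neq_ltn im.
set c := (if m is _.+2 then _ else _); ring.
Qed.

Lemma qf_e x y n k : (k < n)%N -> qf x y (fun i => (i == k)%:R) n = x k.
Proof.
elim: n => [//|m IH] hk /=.
have [km|mk] := ltnP k m.
  rewrite IH //; have -> : (m == k) = false by apply/negbTE; rewrite neq_ltn km orbT.
  case: m IH hk km => [|[|j]] //= IH hk km; ring.
have ek : k = m by lia.
subst k; rewrite qf0; last by move=> i im; rewrite (_ : (i == m) = false) //; apply/negbTE; rewrite neq_ltn im.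
rewrite eqxx; case: m IH hk mk => [|[|j]] //= IH hk mk; try ring.
rewrite (_ : (j == j.+2) = false); last by apply/negbTE; rewrite neq_ltn ltnW.
by rewrite mulr0 mul0r addr0 expr1n mulr1 add0r.
Qed.

Lemma sqr_gt0 (a : R) : a != 0 -> 0 < a ^+ 2.
Proof. by move=> a0; rewrite lt0r sqrf_eq0 a0 sqr_ge0. Qed.

Lemma superadd (r a b : R) : 1 <= r -> 0 <= a -> 0 <= b ->
  a `^ r + b `^ r <= (a + b) `^ r.
Proof.
move=> r1 ha hb; have r0 : 0 < r by apply: lt_le_trans r1.
have hab : 0 <= a + b by apply: addr_ge0.
rewrite -(mulr_powRB1 ha r0) -(mulr_powRB1 hb r0) -(mulr_powRB1 hab r0) mulrDl.
have r10 : 0 <= r - 1 by rewrite subr_ge0.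
apply: lerD; apply: ler_wpM2l => //; apply: ge0_ler_powR => //;
  rewrite ?nnegrE //; lra.
Qed.

Lemma qf_cut x y v m :
  qf x y (fun i => if i == m then 0 else v i) m.+1 = qf x y v m.
Proof.
rewrite /= eqxx (@qf_ext _ _ _ x y v) //; last first.
  by move=> i im; rewrite (_ : (i == m) = false) //; apply/negbTE; rewrite neq_ltn im.
by case: m => [|[|k]] /=; ring.
Qed.

Lemma qfS x y v m : qf x y v m.+1 = qf x y v m + x m * v m ^+ 2 +
    (if m is k.+2 then 2 * y k * v k * v m else 0).
Proof. by []. Qed.

Lemma qfS3 x y v k : qf x y v k.+3 =
  qf x y v k.+2 + x k.+2 * v k.+2 ^+ 2 + 2 * y k * v k * v k.+2.
Proof. by []. Qed.

Definition xsch x y k i := if i == k then x k - y k ^+ 2 / x k.+2 else x i.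

Lemma schur x y v k : x k.+2 != 0 ->
  qf x y (fun i => if i == k.+2 then - (y k * v k) / x k.+2 else v i) k.+3
  = qf (xsch x y k) y v k.+2.
Proof.
move=> c0.
rewrite qfS3 eqxx (_ : (k == k.+2) = false); last by apply/negbTE; lia.
rewrite (@qf_ext _ _ _ x y v) //; last first.
  by move=> i im; rewrite (_ : (i == k.+2) = false) //; apply/negbTE; rewrite neq_ltn im.
rewrite (@qf_modx x (xsch x y k) y v k.+2 k) //; last first.
  by move=> i /negbTE ik; rewrite /xsch ik.
rewrite /xsch eqxx; by field.
Qed.

Lemma pow_step r x y v k : 1 <= r -> (forall i, 0 <= y i) ->
  0 < x k.+2 -> 0 <= xsch x y k k ->
  qf (fun i => xsch x y k i `^ r) (fun i => y i `^ r) v k.+2 <=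
  qf (fun i => x i `^ r) (fun i => y i `^ r) v k.+3.
Proof.
move=> r1 hy c0 x'0.
have r0 : r != 0 by apply/negP => /eqP r0; rewrite r0 in r1; lra.
set c := x k.+2; set d := y k ^+ 2 / c.
have d0 : 0 <= d by apply: divr_ge0; [apply: sqr_ge0 | apply: ltW].
have xk : x k = xsch x y k k + d by rewrite /xsch eqxx /d; ring.
have sup := @superadd r _ _ r1 x'0 d0; rewrite -xk in sup.
rewrite qfS3.
rewrite (@qf_modx (fun i => x i `^ r) (fun i => xsch x y k i `^ r) _ _ k.+2 k) //; last first.
  by move=> i /negbTE ik; rewrite /xsch ik.
set Q := qf _ _ _ _.
set A := d `^ r. set C := c `^ r. set B := y k `^ r.
have C0 : 0 < C by apply: powR_gt0.
have AC : A * C = B * B.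
  rewrite /A /C -powRM // ?(ltW c0) // /d mulrAC -mulrA mulfV ?gt_eqF // mulr1.
  by rewrite expr2 powRM.
have A0 : 0 <= A by apply: powR_ge0.
rewrite -/A in sup.
have quad : 0 <= A * v k ^+ 2 + C * v k.+2 ^+ 2 + 2 * B * v k * v k.+2.
  rewrite -(pmulr_rge0 _ C0).
  have -> : C * (A * v k ^+ 2 + C * v k.+2 ^+ 2 + 2 * B * v k * v k.+2)
     = (B * v k + C * v k.+2) ^+ 2 + (A * C - B * B) * v k ^+ 2 by ring.
  by rewrite AC subrr mul0r addr0; exact: sqr_ge0.
have h1 : 0 <= (x k `^ r - xsch x y k k `^ r - A) * v k ^+ 2.
  by apply: mulr_ge0; [lra | apply: sqr_ge0].
rewrite -/C. lra.
Qed.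

Lemma qfS01 x y v m : (m < 2)%N -> qf x y v m.+1 = qf x y v m + x m * v m ^+ 2.
Proof. by case: m => [|[|m]] //= _; rewrite addr0. Qed.

Definition psdq n x y := forall v, 0 <= qf x y v n.
Definition pdq n x y := forall v, (exists2 i, (i < n)%N & v i != 0) -> 0 < qf x y v n.

Lemma xsch_ge0 x y k : (forall i, 0 <= x i) -> 0 <= xsch x y k k ->
  forall i, 0 <= xsch x y k i.
Proof. by move=> hx hk i; case: (eqVneq i k) => [->//|ik]; rewrite /xsch (negbTE ik). Qed.

Lemma psd_pow r n : 1 <= r -> forall x y, (forall i, 0 <= x i) -> (forall i, 0 <= y i) ->
  psdq n x y -> psdq n (fun i => x i `^ r) (fun i => y i `^ r).
Proof.
move=> r1; have r0 : r != 0 by apply/negP => /eqP r0; rewrite r0 in r1; lra.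
elim: n => [|m IH] x y hx hy hq v; first by [].
have hcut : psdq m x y by move=> w; rewrite -(qf_cut x y w m); exact: hq.
case: m IH hq hcut => [|[|k]] IH hq hcut.
- rewrite qfS01 //; apply: addr_ge0; first exact: IH.
  by apply: mulr_ge0; [apply: powR_ge0 | apply: sqr_ge0].
- rewrite qfS01 //; apply: addr_ge0; first exact: IH.
  by apply: mulr_ge0; [apply: powR_ge0 | apply: sqr_ge0].
have [c0|cpos] : x k.+2 = 0 \/ 0 < x k.+2.
  by move: (hx k.+2); rewrite le_eqVlt => /orP [/eqP <-|]; [left|right].
- have yk0 : y k = 0.
    have [//|yne] := eqVneq (y k) 0; exfalso.
    pose t := - (x k + 1) / (2 * y k).
    have := hq (fun i => (i == k)%:R + t * (i == k.+2)%:R).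
    rewrite qfS3 (@qf_ext _ _ _ x y (fun i => (i == k)%:R)) //; last first.
      move=> i ik; rewrite (_ : (i == k.+2) = false) ?mulr0 ?addr0 //.
      by apply/negbTE; lia.
    rewrite qf_e // eqxx (_ : (k == k.+2) = false); last by apply/negbTE; lia.
    rewrite (_ : (k.+2 == k) = false); last by apply/negbTE; lia.
    rewrite c0 /=.
    have : x k + 2 * y k * t = -1 by rewrite /t; field; exact: yne.
    rewrite eqxx !mul0r !mulr0 !addr0 !add0r !mulr1; lra.
  have := IH x y hx hy hcut v.
  rewrite qfS3 c0 yk0 powR0 //; lra.
have hs : psdq k.+2 (xsch x y k) y.
  by move=> w; rewrite -schur ?gt_eqF //; exact: hq.
have x'k : 0 <= xsch x y k k.
  by rewrite -(@qf_e (xsch x y k) y k.+2 k) //; exact: hs.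
have h := IH _ _ (@xsch_ge0 x y k hx x'k) hy hs v.
have h2 := @pow_step r x y v k r1 hy cpos x'k.
exact: le_trans h h2.
Qed.

Lemma pd_pow r n : 1 <= r -> forall x y, (forall i, 0 <= x i) -> (forall i, 0 <= y i) ->
  pdq n x y -> pdq n (fun i => x i `^ r) (fun i => y i `^ r).
Proof.
move=> r1; have r0 : r != 0 by apply/negP => /eqP r0; rewrite r0 in r1; lra.
elim: n => [|m IH] x y hx hy hq v [i hi vi]; first by [].
have cpos : 0 < x m.
  rewrite -(@qf_e x y m.+1 m) //; apply: hq; exists m => //.
  by rewrite eqxx oner_eq0.
have [[j jm vj]|allz] : (exists2 j, (j < m)%N & v j != 0) \/ (forall j, (j < m)%N -> v j = 0).
  case: (boolP [exists j : 'I_m, v j != 0]) => [/existsP [j vj] | /existsPn allz].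
    by left; exists (val j); [exact: ltn_ord | exact: vj].
  by right => j jm; have := allz (Ordinal jm); rewrite negbK => /eqP.
- have hcut : (m < 2)%N -> pdq m x y.
    move=> _ w [l lm wl]; rewrite -(qf_cut x y w m); apply: hq; exists l; first by apply: ltnW.
    by rewrite (_ : (l == m) = false) //; apply/negbTE; lia.
  case: m IH hq hcut cpos jm hi => [|[|k]] IH hq hcut cpos jm hi.
  + by [].
  + rewrite qfS01 //; apply: ltr_pwDl; first by apply: IH => //; [exact: hcut | exists j].
    by apply: mulr_ge0; [apply: powR_ge0 | apply: sqr_ge0].
  have hs : pdq k.+2 (xsch x y k) y.
    move=> w [l lm wl]; rewrite -schur ?gt_eqF //; apply: hq; exists l; first by apply: ltnW.
    by rewrite (_ : (l == k.+2) = false) //; apply/negbTE; lia.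
  have x'k : 0 <= xsch x y k k.
    apply: ltW; rewrite -(@qf_e (xsch x y k) y k.+2 k) //; apply: hs; exists k => //.
    by rewrite eqxx oner_eq0.
  apply: lt_le_trans (IH _ _ (@xsch_ge0 x y k hx x'k) hy hs v _) _; first by exists j.
  exact: pow_step.
- have im : i = m.
    have [il|] := ltnP i m; first by move: vi; rewrite allz // eqxx.
    by move=> mi; lia.
  subst i.
  have vm : 0 < x m `^ r * v m ^+ 2 by apply: mulr_gt0; [apply: powR_gt0 | apply: sqr_gt0].
  case: m IH hq allz cpos hi vi vm => [|[|k]] IH hq allz cpos hi vi vm.
  + by rewrite qfS01 // qf0 ?add0r.
  + by rewrite qfS01 // qf0 ?add0r // => l; move/allz.
  rewrite qfS3 qf0 // (allz k) //; lra.
Qed.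

Section Bridge.
Variable N : nat.
Variable b : nat -> nat -> R.
Hypothesis bsym : forall i j, (i < N)%N -> (j < N)%N -> b i j = b j i.
Hypothesis bz : forall i j, (i < N)%N -> (j < N)%N -> i != j -> i != j.+2 -> j != i.+2 -> b i j = 0.

Lemma colsum w p : (p < N)%N ->
  \sum_(0 <= i < p) w i * b i p * w p =
  (if p is k.+2 then w k * b k p * w p else 0).
Proof.
move=> pN.
have z : forall q, (q <= p)%N -> (q.+2 <= p)%N || (p < 2)%N -> \sum_(0 <= i < q) w i * b i p * w p = 0.
  move=> q hq1 hq; rewrite big_nat big1 // => i /andP [_ iq].
  by rewrite bz ?mulr0 ?mul0r //; lia.
case: p pN z => [|[|k]] pN z.
- by rewrite big_geq.
- by rewrite z.
rewrite big_nat_recr // big_nat_recr //= (bz (k.+1) (k.+2)) ?mulr0 ?mul0r ?addr0; try lia.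
by rewrite z ?add0r //; lia.
Qed.

Lemma dsum_qf w p : (p <= N)%N ->
  \sum_(0 <= i < p) \sum_(0 <= j < p) w i * b i j * w j =
  qf (fun i => b i i) (fun i => b i i.+2) w p.
Proof.
elim: p => [|p IH] pN; first by rewrite big_geq.
rewrite big_nat_recr //= big_nat_recr //=.
under eq_bigr => i _ do rewrite big_nat_recr //=.
rewrite big_split /= IH; last by apply: ltnW.
have -> : \sum_(0 <= i < p) w p * b p i * w i = \sum_(0 <= i < p) w i * b i p * w p.
  apply: eq_big_nat => i /andP [_ ip]; rewrite bsym; try lia; ring.
rewrite colsum //.
case: p IH pN => [|[|k]] IH pN; rewrite ?expr2; ring.
Qed.
End Bridge.

Section Mx.
Variable m : nat.
Local Notation N := m.+1.

Definition xa (A : 'M[R]_N) i := A (inord i) (inord i).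
Definition ya (A : 'M[R]_N) i := A (inord i) (inord i.+2).
Definition vu (u : 'rV[R]_N) i := u 0 (inord i).

Lemma sum_ord_nat (G : 'I_N -> R) : \sum_(i < N) G i = \sum_(0 <= i < N) G (inord i).
Proof. by rewrite big_mkord; apply: eq_bigr => i _; rewrite inord_val. Qed.

Lemma bridge (A : 'M[R]_N) (u : 'rV[R]_N) : dist2_pattern A ->
  (u *m A *m u^T) 0 0 = qf (xa A) (ya A) (vu u) N.
Proof.
move=> [hs [_ hz]].
have -> : (u *m A *m u^T) 0 0 = \sum_(i < N) \sum_(j < N) u 0 i * A i j * u 0 j.
  rewrite mxE exchange_big; apply: eq_bigr => j _; rewrite !mxE mulr_suml.
  by [].
rewrite sum_ord_nat.
under eq_bigr => i _ do rewrite sum_ord_nat.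
rewrite (@dsum_qf N (fun i j => A (inord i) (inord j))) //.
- move=> i j iN jN; by rewrite -[in LHS]hs mxE.
- move=> i j iN jN ij ij2 ji2; apply: hz; rewrite ?inordK //; try lia.
  by rewrite -(inj_eq val_inj) /= !inordK.
Qed.

Lemma rv_nz (u : 'rV[R]_N) : u != 0 -> exists2 i, (i < N)%N & vu u i != 0.
Proof.
move=> u0; case: (boolP [exists j : 'I_N, u 0 j != 0]) => [/existsP [j vj] | /existsPn allz].
  by exists (val j); [exact: ltn_ord | rewrite /vu inord_val].
exfalso; move/negP: u0; apply; apply/eqP/matrixP => a j.
by rewrite ord1 mxE; apply/eqP; move: (allz j); rewrite negbK.
Qed.

Lemma nz_rv v i : (i < N)%N -> v i != 0 -> (\row_(j < N) v j) != 0.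
Proof.
move=> iN vi; apply/negP => /eqP h.
by move: vi; have := congr1 (fun M : 'rV[R]_N => M 0 (Ordinal iN)) h; rewrite !mxE /= => ->; rewrite eqxx.
Qed.

Lemma vu_row v i : (i < N)%N -> vu (\row_(j < N) v j) i = v i.
Proof. by move=> iN; rewrite /vu mxE inordK. Qed.

Lemma posdef_pd A : dist2_pattern A -> posdef A -> pdq N (xa A) (ya A).
Proof.
move=> hp [_ h] v [i iN vi].
have := h _ (@nz_rv v i iN vi); rewrite bridge //.
by rewrite (@qf_ext _ _ _ (xa A) (ya A) v) // => j jN; rewrite (@vu_row v j jN).
Qed.

Lemma psd_psdq A : dist2_pattern A -> possemidef A -> psdq N (xa A) (ya A).
Proof.
move=> hp [_ h] v.
have := h (\row_(j < N) v j); rewrite bridge //.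
by rewrite (@qf_ext _ _ _ (xa A) (ya A) v) // => j jN; rewrite (@vu_row v j jN).
Qed.

Lemma pd_posdef A : dist2_pattern A -> pdq N (xa A) (ya A) -> posdef A.
Proof.
move=> hp h; split; first by case: hp.
by move=> u /rv_nz hu; rewrite bridge //; apply: h.
Qed.

Lemma psdq_psd A : dist2_pattern A -> psdq N (xa A) (ya A) -> possemidef A.
Proof.
move=> hp h; split; first by case: hp.
by move=> u; rewrite bridge //; apply: h.
Qed.

Lemma hpow_pattern (r : R) (A : 'M[R]_N) : 0 < r -> dist2_pattern A -> dist2_pattern (hpow r A).
Proof.
move=> r0 [hs [hn hz]]; split; [|split].
- by apply/matrixP => i j; rewrite !mxE -[in LHS]hs mxE.
- by move=> i j; rewrite mxE powR_ge0.
- by move=> i j ij h1 h2; rewrite mxE hz // powR0 // gt_eqF.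
Qed.

Lemma xa_hpow (r : R) (A : 'M[R]_N) : xa (hpow r A) = fun i => xa A i `^ r.
Proof. by apply: boolp.funext => i; rewrite /xa mxE. Qed.
Lemma ya_hpow (r : R) (A : 'M[R]_N) : ya (hpow r A) = fun i => ya A i `^ r.
Proof. by apply: boolp.funext => i; rewrite /ya mxE. Qed.

End Mx.
Arguments xa {m}. Arguments ya {m}. Arguments vu {m}.


Definition edge (i j : nat) := ((i.+2 == j) && ((i == 0) || (i == 2))) ||
  ((j.+2 == i) && ((j == 0) || (j == 2))).
Definition F (t : R) (i j : nat) : R :=
  if i == j then (if i == 2 then 2 else 1) else if edge i j then t else 0.
Definition Xf (a : R) (i : nat) : R := if i == 2 then a else 1.
Definition Yf (b : R) (i : nat) : R := if (i == 0) || (i == 2) then b else 0.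

Lemma FX t i : F t i i = Xf 2 i. Proof. by rewrite /F eqxx. Qed.
Lemma FY t i : F t i i.+2 = Yf t i.
Proof.
rewrite /F /edge eqxx /= (_ : (i == i.+2) = false); last by apply/negbTE; lia.
have -> : (i.+4 == i) = false by apply/negbTE; lia.
by rewrite andFb orbF.
Qed.

Lemma sq0 (a : R) : a ^+ 2 = 0 -> a = 0.
Proof. by move/eqP; rewrite sqrf_eq0 => /eqP. Qed.

Lemma base5 (t : R) (v : nat -> R) : 0 <= t < 1 ->
  0 <= qf (Xf 2) (Yf t) v 5 /\
  ((exists2 i, (i < 5)%N & v i != 0) -> 0 < qf (Xf 2) (Yf t) v 5).
Proof.
move=> /andP [t0 t1].
have -> : qf (Xf 2) (Yf t) v 5 = (v 0 + t * v 2) ^+ 2 + (v 4 + t * v 2) ^+ 2 +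
   (2 * (1 - t ^+ 2)) * v 2 ^+ 2 + v 1 ^+ 2 + v 3 ^+ 2.
  by rewrite /= /Xf /Yf /=; ring.
have c0 : 0 < 2 * (1 - t ^+ 2) by nra.
have s1 := sqr_ge0 (v 0 + t * v 2). have s2 := sqr_ge0 (v 4 + t * v 2).
have s3 : 0 <= 2 * (1 - t ^+ 2) * v 2 ^+ 2 by apply: mulr_ge0; [apply: ltW | apply: sqr_ge0].
have s4 := sqr_ge0 (v 1). have s5 := sqr_ge0 (v 3).
split; first by lra.
move=> [i hi vi]; rewrite lt_neqAle; apply/andP; split; last by lra.
apply/negP => /eqP E0.
have e1 : (v 0 + t * v 2) ^+ 2 = 0 by lra.
have e2 : (v 4 + t * v 2) ^+ 2 = 0 by lra.
have e3 : 2 * (1 - t ^+ 2) * v 2 ^+ 2 = 0 by lra.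
have e4 : v 1 ^+ 2 = 0 by lra.
have e5 : v 3 ^+ 2 = 0 by lra.
have h2 : v 2 = 0.
  by apply: sq0; move/eqP: e3; rewrite mulf_eq0 (gt_eqF c0) /= => /eqP.
move/sq0: e1; move/sq0: e2; move/sq0: e4; move/sq0: e5; rewrite h2 mulr0 !addr0 => h3 h1 h4 h0.
by case: i hi vi => [|[|[|[|[|i]]]]] //= _; rewrite ?h0 ?h1 ?h2 ?h3 ?h4 eqxx.
Qed.

Lemma cex_pd (t : R) : 0 <= t < 1 -> forall p, (5 <= p)%N -> forall v,
  (0 <= qf (Xf 2) (Yf t) v p) /\
  ((exists2 i, (i < p)%N & v i != 0) -> 0 < qf (Xf 2) (Yf t) v p).
Proof.
move=> ht; elim => [//|p IH] hp v.
case: (ltnP p 5) => p5.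
  have e : p = 4%N by lia.
  by subst p; apply: base5.
have step : qf (Xf 2) (Yf t) v p.+1 = qf (Xf 2) (Yf t) v p + v p ^+ 2.
  rewrite qfS /Xf (_ : (p == 2) = false); last by apply/negbTE; lia.
  case: p IH hp p5 => [|[|k]] // IH hp p5.
  rewrite /Yf (_ : (k == 0) = false); last by apply/negbTE; lia.
  rewrite (_ : (k == 2) = false) /=; last by apply/negbTE; lia.
  ring.
have [IH1 IH2] := IH p5 v.
rewrite step; split; first by apply: addr_ge0 => //; apply: sqr_ge0.
move=> [i hi vi]; case: (ltnP i p) => ip.
  by apply: ltr_pwDl; [apply: IH2; exists i | apply: sqr_ge0].
have e : i = p by lia.
subst i; have := @sqr_gt0 (v p) vi; lra.
Qed.

Lemma qf_tail (x y w : nat -> R) p0 p : (p0 <= p)%N ->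
  (forall i, (p0 <= i)%N -> (i < p)%N -> w i = 0) -> qf x y w p = qf x y w p0.
Proof.
elim: p => [|p IH] h hw; first by have -> : p0 = 0%N by lia.
case: (ltnP p p0) => pp.
  by have -> : p0 = p.+1 by lia.
rewrite qfS IH //; last by move=> i hi ip; apply: hw => //; lia.
rewrite (hw p) //.
by case: (p) => [|[|k]]; rewrite ?expr2 ?mulr0 ?addr0.
Qed.

Definition wv (i : nat) : R := if i == 0%N then 1 else if i == 2 then -1 else if i == 4 then 1 else 0.

Lemma cval (a b : R) : qf (Xf a) (Yf b) wv 5 = 2 + a - 4 * b.
Proof. rewrite /= /Xf /Yf /wv /=; ring. Qed.

Lemma pow2_lt (r : R) : r < 1 -> 2 `^ r < 2.
Proof.
move=> r1; rewrite /powR (_ : (2 == 0 :> R) = false); last by apply/negbTE; rewrite pnatr_eq0.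
have l2 : 0 < ln (2 : R) by apply: ln_gt0; rewrite ltr1n.
rewrite -[X in _ < X]lnK ?posrE // ltr_expR; nra.
Qed.

Section M.
Variable m : nat.
Local Notation N := m.+1.
Definition Pm (t : R) : 'M[R]_N := \matrix_(i, j) F t i j.

Lemma Fsym t i j : F t i j = F t j i.
Proof.
rewrite /F; case: (eqVneq i j) => [->//|ij].
by rewrite /edge orbC.
Qed.

Lemma Pm_pattern t : 0 <= t -> dist2_pattern (Pm t).
Proof.
move=> t0; split; [|split].
- by apply/matrixP => i j; rewrite !mxE Fsym.
- move=> i j; rewrite mxE /F; case: ifP => _; first by case: ifP.
  by case: ifP.
- move=> i j ij h1 h2; have ij2 : ((i:nat) == j) = false by apply/negbTE; exact: ij.
  rewrite mxE /F ij2 /edge.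
  rewrite (_ : (i.+2 == j) = false); last by apply/negbTE; lia.
  by rewrite (_ : (j.+2 == i) = false) //; apply/negbTE; lia.
Qed.

Lemma xa_Pm t i : (i < N)%N -> xa (Pm t) i = Xf 2 i.
Proof. by move=> iN; rewrite /xa mxE !inordK // FX. Qed.
Lemma ya_Pm t i : (i.+2 < N)%N -> ya (Pm t) i = Yf t i.
Proof. by move=> iN; rewrite /ya mxE !inordK ?FY //; lia. Qed.
End M.

Lemma pdq_ext n (x y x' y' : nat -> R) :
  (forall i, (i < n)%N -> x i = x' i) -> (forall i, (i.+2 < n)%N -> y i = y' i) ->
  pdq n x y -> pdq n x' y'.
Proof.
move=> hx hy h v hv.
by rewrite -(@qf_ext x y v x' y' v n hx hy (fun _ _ => erefl)); apply: h.
Qed.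

Lemma Q0 n (A : 'M[R]_n) : ((0 : 'rV[R]_n) *m A *m (0 : 'rV[R]_n)^T) 0 0 = 0.
Proof. by rewrite !mul0mx mxE. Qed.

Lemma pd_psd n (A : 'M[R]_n) : posdef A -> possemidef A.
Proof.
move=> [hs h]; split => // u.
by case: (eqVneq u 0) => [->|u0]; [rewrite Q0 | apply: ltW; apply: h].
Qed.

Lemma cex m (r : R) : (5 <= m.+1)%N -> 0 < r -> r < 1 ->
  exists P : 'M[R]_m.+1, [/\ dist2_pattern P, posdef P &
     exists u : 'rV[R]_m.+1, (u *m hpow r P *m u^T) 0 0 < 0].
Proof.
move=> m4 r0 r1.
have a2 : 2 `^ r < 2 := @pow2_lt r r1.
have a0 : 0 < 2 `^ r by apply: powR_gt0.
have [t ht] : exists t : R, t = ((2 + 2 `^ r) / 4 + 1) / 2 by eexists.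
have t0 : 0 < t by rewrite ht; lra.
have t1 : t < 1 by rewrite ht; lra.
have t01 : 0 <= t < 1 by rewrite (ltW t0) t1.
exists (Pm m t); split.
- exact: (@Pm_pattern m t (ltW t0)).
- apply: pd_posdef; first exact: (@Pm_pattern m t (ltW t0)).
  apply: (@pdq_ext _ (Xf 2) (Yf t)).
  + by move=> i iN; rewrite xa_Pm.
  + by move=> i iN; rewrite ya_Pm.
  by move=> v; case: (@cex_pd t t01 m.+1 m4 v).
exists (\row_(j < m.+1) wv j).
rewrite bridge; last exact: hpow_pattern r0 (@Pm_pattern m t (ltW t0)).
rewrite xa_hpow ya_hpow.
rewrite (@qf_ext _ _ _ (Xf (2 `^ r)) (Yf (t `^ r)) (wv)); first last.
- by move=> i iN; rewrite vu_row.
- move=> i iN; rewrite ya_Pm // /Yf; case: ifP => _ //.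
  by rewrite powR0 // gt_eqF.
- move=> i iN; rewrite xa_Pm // /Xf; case: ifP => _ //.
  by rewrite powR1.
rewrite (@qf_tail _ _ _ 5) //; last first.
  by move=> i hi _; case: i hi => [|[|[|[|[|i]]]]].
rewrite cval.
have : t <= t `^ r by apply: ger1_powR; [rewrite t0 ltW | apply: ltW].
rewrite ht; lra.
Qed.
End QF.
Arguments cex {R m r}. Arguments Q0 {R n}. Arguments pd_psd {R n A}.
Arguments pd_posdef {R m A}. Arguments psdq_psd {R m A}. Arguments hpow_pattern {R m r A}.
Arguments xa_hpow {R m}. Arguments ya_hpow {R m}. Arguments pd_pow {R r n}. Arguments psd_pow {R r n}.
Arguments posdef_pd {R m A}. Arguments psd_psdq {R m A}. Arguments xa {R m}. Arguments ya {R m}.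

Theorem theorem1p3 (R : realType) (n : nat) (r : R) :
  (5 <= n)%N -> 0 < r ->
  ((forall P : 'M[R]_n, dist2_pattern P -> posdef P -> posdef (hpow r P))
     <-> 1 <= r) /\
  ((forall P : 'M[R]_n, dist2_pattern P -> possemidef P -> possemidef (hpow r P))
     <-> 1 <= r).
Proof.
move=> n5 r0.
case: n n5 => [//|m] n5.
have xge0 : forall P : 'M[R]_m.+1, dist2_pattern P -> forall i, 0 <= xa P i.
  by move=> P [_ [hn _]] i; apply: hn.
have yge0 : forall P : 'M[R]_m.+1, dist2_pattern P -> forall i, 0 <= ya P i.
  by move=> P [_ [hn _]] i; apply: hn.
split; split.
- move=> H; have [//|r1] := lerP 1 r.
  have [P [hp hpd [u hu]]] := cex n5 r0 r1.
  have [_ h] := H P hp hpd.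
  have u0 : u != 0 by apply/negP => /eqP u0; move: hu; rewrite u0 Q0 ltxx.
  by have := h u u0; lra.
- move=> r1 P hp hpd.
  apply: pd_posdef; first exact: hpow_pattern.
  rewrite xa_hpow ya_hpow.
  by apply: pd_pow => //; [apply: xge0 | apply: yge0 | apply: posdef_pd].
- move=> H; have [//|r1] := lerP 1 r.
  have [P [hp hpd [u hu]]] := cex n5 r0 r1.
  have [_ h] := H P hp (pd_psd hpd).
  by have := h u; lra.
- move=> r1 P hp hpd.
  apply: psdq_psd; first exact: hpow_pattern.
  rewrite xa_hpow ya_hpow.
  by apply: psd_pow => //; [apply: xge0 | apply: yge0 | apply: psd_psdq].
Qed.
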